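(* Let $(\Omega,\preceq)$ be a pre-ordered set, let $n_1\ge 0$, and let $(t,c)$ and $(t',c')$ be two segments over $\Omega$ with domain $[n_1]$. If there exists a morphism $(t,c)\to(t',c')$ in $\mathbf{Seg}(\Omega\,|\,n_1)$, then it is the only morphism from $(t,c)$ to $(t',c')$ in $\mathbf{Seg}(\Omega)$.
   Context: For $n\ge 1$, $[n]=\{1,\dots,n\}$ with its usual order, and $[0]=\emptyset$. A segment over a pre-ordered set $(\Omega,\preceq)$ is a pair $(t,c)$ where $t:[n_1]\to[n_0]$ is an order-preserving surjection and $c:[n_0]\to\Omega$ is a function; $[n_1]$ is its domain. A morphism of segments $(t,c)\to(t',c')$ (with $t':[n_1']\to[n_0']$, $c':[n_0']\to\Omega$) is a pair $(f_1,f_0)$ with $f_1:[n_1]\to[n_1']$ an order-preserving injection and $f_0:[n_0]\to[n_0']$ order-preserving, such that $t'\circ f_1=f_0\circ t$ and $c'(f_0(i))\preceq c(i)$ for all $i\in[n_0]$; composition is componentwise. This gives the category $\mathbf{Seg}(\Omega)$. The subcategory $\mathbf{Seg}(\Omega\,|\,n_1)$ has as objects the segments with domain $[n_1]$ and as morphisms those morphisms $(f_1,f_0)$ with $f_1=\mathrm{id}_{[n_1]}$. *)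

(* Defs.v *)
(* [n] = {1,..,n} is modelled by the ordinal type 'I_n = {0,..,n-1}
   with its usual order (an order isomorphism shifting by one). *)
From mathcomp Require Import all_boot.
Set Implicit Arguments. Unset Strict Implicit. Unset Printing Implicit Defensive.

Definition ord_monotone (m n : nat) (f : 'I_m -> 'I_n) : Prop :=
  forall i j : 'I_m, i <= j -> f i <= f j.

Definition ord_surjective (m n : nat) (f : 'I_m -> 'I_n) : Prop :=
  forall j : 'I_n, exists i : 'I_m, f i = j.

Definition is_segment (Omega : Type) (n1 n0 : nat)
  (t : 'I_n1 -> 'I_n0) (c : 'I_n0 -> Omega) : Prop :=
  ord_monotone t /\ ord_surjective t.

Definition seg_morphism (Omega : Type) (le : Omega -> Omega -> Prop)
  (n1 n0 n1' n0' : nat)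
  (t : 'I_n1 -> 'I_n0) (c : 'I_n0 -> Omega)
  (t' : 'I_n1' -> 'I_n0') (c' : 'I_n0' -> Omega)
  (f1 : 'I_n1 -> 'I_n1') (f0 : 'I_n0 -> 'I_n0') : Prop :=
  [/\ ord_monotone f1, injective f1, ord_monotone f0,
      (forall i : 'I_n1, t' (f1 i) = f0 (t i)) &
      (forall i : 'I_n0, le (c' (f0 i)) (c i))].

(* Main.v *)
From Stdlib Require Import FunctionalExtensionality.
Require Import Defs.
From mathcomp Require Import all_boot zify.
Set Implicit Arguments. Unset Strict Implicit.

Lemma strict_of (n : nat) (g : 'I_n -> 'I_n) :
  ord_monotone g -> injective g -> forall i j : 'I_n, i < j -> g i < g j.
Proof.
move=> Hm Hi i j Hij.
rewrite ltn_neqAle Hm ?(ltnW Hij) // andbT.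
apply/negP => /eqP/val_inj/Hi E; by rewrite E ltnn in Hij.
Qed.

Lemma mono_inj_id (n : nat) (g : 'I_n -> 'I_n) :
  ord_monotone g -> injective g -> forall i, g i = i.
Proof.
move=> Hm Hi.
have St := strict_of Hm Hi.
have A : forall k (i : 'I_n), nat_of_ord i = k -> k <= g i.
  elim=> [i _ //|k IH i Hik].
  have Hk : k < n by rewrite (leq_trans _ (ltn_ord i)) // Hik.
  have := IH (Ordinal Hk) erefl.
  have := St (Ordinal Hk) i; rewrite Hik /= ltnSn => /(_ isT).
  by move=> H1 H2; exact: leq_ltn_trans H2 H1.
have B : forall k (i : 'I_n), nat_of_ord i + k = n.-1 -> g i + k <= n.-1.
  elim=> [i _|k IH i Hik].
    by have := ltn_ord (g i); rewrite addn0; lia.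
  have Hk : i.+1 < n by have := ltn_ord i; lia.
  have := IH (Ordinal Hk); rewrite /= addSnnS => /(_ Hik).
  have := St i (Ordinal Hk); rewrite /= ltnSn => /(_ isT).
  move=> H1 H2; lia.
move=> i; apply: val_inj; apply/eqP; rewrite eqn_leq A // andbT.
have H := B (n.-1 - i) i; have Hlt := ltn_ord i; change (nat_of_ord (g i) <= nat_of_ord i); lia.
Qed.

Theorem mainTheorem1 (Omega : Type) (le : Omega -> Omega -> Prop)
  (le_refl : forall x, le x x)
  (le_trans : forall x y z, le x y -> le y z -> le x z)
  (n1 n0 n0' : nat)
  (t : 'I_n1 -> 'I_n0) (c : 'I_n0 -> Omega)
  (t' : 'I_n1 -> 'I_n0') (c' : 'I_n0' -> Omega)
  (Hseg : is_segment t c) (Hseg' : is_segment t' c')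
  (f0 : 'I_n0 -> 'I_n0')
  (Hf : seg_morphism le t c t' c' (fun i : 'I_n1 => i) f0) :
  forall (g1 : 'I_n1 -> 'I_n1) (g0 : 'I_n0 -> 'I_n0'),
    seg_morphism le t c t' c' g1 g0 ->
    g1 = (fun i : 'I_n1 => i) /\ g0 = f0.
Proof.
move=> g1 g0 [Hm Hi _ Ht _].
have E := mono_inj_id Hm Hi.
case: Hf => _ _ _ Ht' _.
case: Hseg => _ Hs.
split; first by apply: functional_extensionality.
apply: functional_extensionality => j.
have [i <-] := Hs j.
by rewrite -Ht -Ht' E.
Qed.
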